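(* Let $D$ be a $3$-dicritical digraph on $n$ vertices that is isomorphic to neither $\overleftrightarrow{K_3}$ nor $\vec{W_3}$. Then $D$ has at most $\binom{n}{2}+\frac{2}{3}n$ arcs.
   Context: Digraphs are finite, with no loops and no parallel arcs (digons, i.e. pairs $uv,vu$, are allowed). A $2$-dicolouring of $D$ is a map $V(D)\to\{1,2\}$ such that each colour class induces an acyclic subdigraph (a digon is a directed cycle). $D$ is $3$-dicritical if $D$ has no $2$-dicolouring but every proper subdigraph has one. $\overleftrightarrow{K_3}$ is the digraph on 3 vertices with all 6 arcs. $\vec{W_3}$ consists of a directed triangle $a\to b\to c\to a$ and a vertex $r$ joined by a digon to each of $a,b,c$. *)

(* Defs.v *)
From mathcomp Require Import all_boot.
Set Implicit Arguments. Unset Strict Implicit. Unset Printing Implicit Defensive.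

(* A digraph on a finite vertex type V is an arc relation a : rel V which is
   irreflexive (no loops); parallel arcs cannot occur; digons (uv and vu) allowed. *)
Definition loopless (V : finType) (a : rel V) : Prop := forall v, ~~ a v v.

Definition has_dicycle (V : finType) (S : {set V}) (a : rel V) : Prop :=
  exists c : seq V, [/\ c != [::], uniq c, all (mem S) c & cycle a c].

Definition two_dicolouring (V : finType) (S : {set V}) (a : rel V)
  (col : V -> bool) : Prop :=
  forall b : bool, ~ has_dicycle [set v in S | col v == b] a.

Definition two_dicolourable (V : finType) (S : {set V}) (a : rel V) : Prop :=
  exists col : V -> bool, two_dicolouring S a col.

Definition subdigraph (V : finType) (a : rel V) (S : {set V}) (a' : rel V) : Prop :=
  forall u v, a' u v -> [&& a u v, u \in S & v \in S].

Definition proper_subdigraph (V : finType) (a : rel V) (S : {set V}) (a' : rel V) : Prop :=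
  subdigraph a S a' /\ (S != setT \/ exists u v, a u v && ~~ a' u v).

Definition dicritical3 (V : finType) (a : rel V) : Prop :=
  ~ two_dicolourable setT a /\
  forall (S : {set V}) (a' : rel V), proper_subdigraph a S a' -> two_dicolourable S a'.

Definition narcs (V : finType) (a : rel V) : nat := #|[set p : V * V | a p.1 p.2]|.

Definition diso (V W : finType) (a : rel V) (b : rel W) : Prop :=
  exists f : V -> W, bijective f /\ forall u v, a u v = b (f u) (f v).

Definition K3_arcs : rel 'I_3 := fun u v => u != v.

Definition W3_arcs : rel 'I_4 := fun u v =>
  [|| (val u == 0) && (val v == 1), (val u == 1) && (val v == 2),
      (val u == 2) && (val v == 0),
      (val u == 3) && (val v != 3) | (val v == 3) && (val u != 3)].

(* Main.v *)
Require Import Defs.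
From mathcomp Require Import all_boot zify.

Set Implicit Arguments. Unset Strict Implicit. Unset Printing Implicit Defensive.


Section Cyc.
Variable V : finType.

Definition restr (S : {set V}) (r : rel V) : rel V :=
  [rel x y | [&& r x y, x \in S & y \in S]].

Lemma path_restr (S : {set V}) (r : rel V) (x : V) p : x \in S -> path r x p -> all (mem S) p ->
  path (restr S r) x p.
Proof.
elim: p x => //= y p IH x xS /andP[rxy pp] /andP[yS aS].
by rewrite /restr /= rxy xS yS /=; apply: IH.
Qed.

Lemma restr_all (S : {set V}) (r : rel V) (x : V) p : path (restr S r) x p -> all (mem S) p.
Proof.
elim: p x => //= y p IH x /andP[/and3P[_ _ yS] pp].
by rewrite yS /=; apply: IH pp.
Qed.

Lemma dicycleP (S : {set V}) (r : rel V) : has_dicycle S r <->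
  exists u w, [/\ u \in S, w \in S, r u w & connect (restr S r) w u].
Proof.
split.
  case=> [[|x p] [] //= _ _ /andP[xS aS]].
  rewrite rcons_path => /andP[pp lr].
  exists (last x p), x; split => //.
    by have := mem_last x p; rewrite inE => /predU1P[->//|]; move/(allP aS).
  apply/connectP; exists p => //; exact: path_restr.
case=> u [w [uS wS ruw /connectP[q pq E]]].
subst u.
move: ruw; case: (shortenP pq) => p' pp' up' _ ruw.
exists (w :: p'); split => //.
  by rewrite /= wS (restr_all pp').
rewrite /= rcons_path ruw andbT.
by apply: sub_path pp' => x y /andP[].
Qed.

Lemma reroute (S : {set V}) (r r' : rel V) :
  (forall x, ~~ r x x) ->
  (forall x y, x \in S -> y \in S -> r x y -> connect (restr S r') x y) ->
  has_dicycle S r -> has_dicycle S r'.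
Proof.
move=> loopr sub /dicycleP [u [w [uS wS ruw cwu]]].
have cuw := sub u w uS wS ruw.
have cwu' : connect (restr S r') w u.
  apply: (connect_sub _ cwu) => x y /and3P[rxy xS yS]; exact: sub.
have nuw : u != w by apply/eqP => E; move: ruw; rewrite -E (negbTE (loopr u)).
case/connectP: cuw => p; case: p => [|u1 q] /=.
  by move=> _ E; rewrite E eqxx in nuw.
move=> /andP[ru1 pq] E.
apply/dicycleP; exists u, u1.
case/and3P: (ru1) => r'1 _ u1S.
split => //.
apply: connect_trans cwu'.
by apply/connectP; exists q.
Qed.

End Cyc.


Section Col.
Variables (V : finType) (a : rel V).
Hypothesis loopA : loopless a.
Hypothesis critA : dicritical3 a.

Definition dg (u v : V) := a u v && a v u.

Lemma dg_sym u v : dg u v = dg v u.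
Proof. by rewrite /dg andbC. Qed.

Lemma dg_neq u v : dg u v -> u != v.
Proof. by move=> /andP[auv _]; apply/eqP => E; move: auv; rewrite E (negbTE (loopA v)). Qed.

Lemma a_neq u v : a u v -> u != v.
Proof. by move=> auv; apply/eqP => E; move: auv; rewrite E (negbTE (loopA v)). Qed.

Lemma crit_remove (rm : rel V) u v : a u v -> rm u v ->
  exists psi, two_dicolouring setT [rel x y | a x y && ~~ rm x y] psi.
Proof.
move=> auv rmuv; case: critA => _ H.
have [] := H setT [rel x y | a x y && ~~ rm x y].
  split; first by move=> x y /= /andP[-> _]; rewrite !inE.
  by right; exists u, v; rewrite /= auv rmuv.
by move=> col Hc; exists col.
Qed.

Lemma noncol psi : ~ two_dicolouring setT a psi.
Proof. by case: critA => H _ Hc; apply: H; exists psi. Qed.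

Lemma agree (r' : rel V) psi :
  (forall x y, psi x = psi y -> a x y -> r' x y) ->
  two_dicolouring setT r' psi -> two_dicolouring setT a psi.
Proof.
move=> H col b Hcyc; apply: (col b); apply: reroute Hcyc => //.
move=> x y; rewrite !inE /= => /eqP xb /eqP yb axy.
by apply: connect1; rewrite /restr /= !inE xb yb eqxx !andbT; apply: H => //; rewrite xb yb.
Qed.

Lemma bichrom (r : rel V) psi x y : two_dicolouring setT r psi ->
  r x y -> r y x -> x != y -> psi x != psi y.
Proof.
move=> col rxy ryx nxy; apply/negP => /eqP E; apply: (col (psi x)).
exists [:: x; y]; split => //=.
- by rewrite inE andbT.
- by rewrite !inE E eqxx.
- by rewrite rxy ryx.
Qed.

Lemma single_removal u v : a u v -> ~~ a v u ->
  exists psi : V -> bool, psi u = psi v /\ forall x y, dg x y -> psi x != psi y.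
Proof.
move=> auv nvu.
have [psi col] := @crit_remove [rel x y | (x == u) && (y == v)] u v auv (introT andP (conj (eqxx u) (eqxx v))).
exists psi; split.
  apply/eqP/negPn/negP => neq; apply: (noncol (psi := psi)); apply: agree col.
  move=> x y pxy axy /=; rewrite axy /=; apply/negP => /andP[/eqP xu /eqP yv].
  by subst x y; rewrite pxy eqxx in neq.
move=> x y /andP[axy ayx]; apply: bichrom col _ _ (a_neq axy) => /=.
  rewrite axy /=; apply/negP => /andP[/eqP xu /eqP yv]; subst x y.
  by rewrite ayx in nvu.
rewrite ayx /=; apply/negP => /andP[/eqP xu /eqP yv]; subst x y.
by rewrite axy in nvu.
Qed.

Lemma digon_removal p q : dg p q ->
  exists psi : V -> bool, psi p = psi q /\ forall x y, dg x y ->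
   ~~ ((x == p) && (y == q)) -> ~~ ((x == q) && (y == p)) -> psi x != psi y.
Proof.
move=> dpq; have /andP[apq aqp] := dpq.
pose rm := [rel x y | ((x == p) && (y == q)) || ((x == q) && (y == p))].
have rmpq : rm p q by rewrite /rm /= !eqxx.
have [psi col] := @crit_remove rm p q apq rmpq.
exists psi; split.
  apply/eqP/negPn/negP => neq; apply: (noncol (psi := psi)); apply: agree col.
  move=> x y pxy axy /=; rewrite axy /=; apply/negP => /orP[] /andP[/eqP xu /eqP yv].
    by subst x y; rewrite pxy eqxx in neq.
  by subst x y; rewrite pxy eqxx in neq.
move=> x y /andP[axy ayx] h1 h2; apply: bichrom col _ _ (a_neq axy) => /=.
  by rewrite axy /= negb_or h1 h2.
rewrite ayx /= negb_or; apply/andP; split; by rewrite andbC.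
Qed.

Lemma noC4 p q r s : dg p q -> dg q r -> dg r s -> dg s p -> p != r -> q != s -> False.
Proof.
move=> dpq dqr drs dsp npr nqs.
have [psi [E H]] := digon_removal dpq.
have nqp : q != p by rewrite eq_sym dg_neq.
have nrq : r != q by rewrite eq_sym dg_neq.
have nsp : s != p by rewrite dg_neq.
have nrp : r != p by rewrite eq_sym.
have nsq : s != q by rewrite eq_sym.
have h1 : psi q != psi r by apply: H => //; rewrite ?(negbTE nqp) ?(negbTE nrp) ?andbF.
have h2 : psi r != psi s by apply: H => //; rewrite ?(negbTE nrq) ?(negbTE nrp).
have h3 : psi s != psi p by apply: H => //; rewrite ?(negbTE nsq) ?(negbTE nsp).
by move: E h1 h2 h3; case: (psi p); case: (psi q); case: (psi r); case: (psi s).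
Qed.

Ltac neqside := apply/negP; let E := fresh "E" in intro E;
  let E1 := fresh "E" in let E2 := fresh "E" in destruct (andP E) as [E1 E2];
  apply (elimT eqP) in E1; apply (elimT eqP) in E2; subst;
  match goal with H : is_true (negb (?x == ?x)) |- _ => by rewrite eqxx in H end.

Lemma noC6 p1 p2 p3 p4 p5 p6 : dg p1 p2 -> dg p2 p3 -> dg p3 p4 -> dg p4 p5 ->
  dg p5 p6 -> dg p6 p1 -> p1 != p3 -> p1 != p4 -> p1 != p5 -> p2 != p4 ->
  p2 != p5 -> p2 != p6 -> False.
Proof.
move=> d12 d23 d34 d45 d56 d61 n13 n14 n15 n24 n25 n26.
have [psi [E H]] := digon_removal d12.
have n12 := dg_neq d12; have n23 := dg_neq d23; have n34 := dg_neq d34.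
have n45 := dg_neq d45; have n56 := dg_neq d56; have n61 := dg_neq d61.
have h1 : psi p2 != psi p3 by apply: H => //; neqside.
have h2 : psi p3 != psi p4 by apply: H => //; neqside.
have h3 : psi p4 != psi p5 by apply: H => //; neqside.
have h4 : psi p5 != psi p6 by apply: H => //; neqside.
have h5 : psi p6 != psi p1 by apply: H => //; neqside.
by move: E h1 h2 h3 h4 h5; case: (psi p1); case: (psi p2); case: (psi p3);
  case: (psi p4); case: (psi p5); case: (psi p6).
Qed.

Lemma path3_nadj v w z y : dg v w -> dg w z -> dg z y -> z != v -> y != w ->
  v != y -> ~~ a v y && ~~ a y v.
Proof.
move=> dvw dwz dzy nzv nyw nvy.
case avy: (a v y); case ayv: (a y v) => //=.
- exfalso; apply: (noC4 dvw dwz dzy) => //; first by rewrite /dg ayv avy.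
  by rewrite eq_sym. by rewrite eq_sym.
- have [psi [E H]] := single_removal avy (negbT ayv).
  have := H _ _ dvw; have := H _ _ dwz; have := H _ _ dzy.
  by move: E; case: (psi v); case: (psi w); case: (psi z); case: (psi y).
- have [psi [E H]] := single_removal ayv (negbT avy).
  have := H _ _ dvw; have := H _ _ dwz; have := H _ _ dzy.
  by move: E; case: (psi v); case: (psi w); case: (psi z); case: (psi y).
Qed.

Lemma trans_tri c x y z : dg c x -> dg c y -> dg c z -> a x y -> a y z -> a x z -> False.
Proof.
move=> dcx dcy dcz axy ayz axz.
have nxy := a_neq axy; have nyz := a_neq ayz; have nxz := a_neq axz.
have ncx := dg_neq dcx; have ncy := dg_neq dcy; have ncz := dg_neq dcz.
pose rm := [rel u w | (u == x) && (w == z)].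
have rmxz : rm x z by rewrite /rm /= !eqxx.
have [psi col] := @crit_remove rm x z axz rmxz.
have bx : psi c != psi x.
  case/andP: dcx => acx axc.
  apply: bichrom col _ _ ncx; rewrite /= ?acx ?axc /=; neqside.
have byy : psi c != psi y.
  case/andP: dcy => acy ayc.
  apply: bichrom col _ _ ncy; rewrite /= ?acy ?ayc /=; neqside.
have pxy : psi x = psi y.
  by move: bx byy; case: (psi c); case: (psi x); case: (psi y).
apply: (noncol (psi := psi)) => b cyc; apply: (col b); apply: reroute cyc => //.
move=> u w; rewrite !inE /= => /eqP ub /eqP wb auw.
case E: ((u == x) && (w == z)).
  case/andP: E => /eqP eu /eqP ew; subst u w.
  apply: (@connect_trans _ _ y); apply: connect1; rewrite /restr /= !inE.
    by rewrite axy (negbTE nyz) andbF /= ub -pxy ub eqxx.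
  by rewrite ayz /= (eq_sym y x) (negbTE nxy) /= -pxy ub wb eqxx.
by apply: connect1; rewrite /restr /= !inE auw E ub wb eqxx.
Qed.
End Col.


Lemma bin2_eq n : 'C(n,2) * 2 + n = n * n.
Proof. elim: n => // n IH; rewrite binS bin1; lia. Qed.

Section Special.
Variables (V : finType) (a : rel V).
Hypothesis loopA : loopless a.
Hypothesis critA : dicritical3 a.

Lemma bound_of k m : narcs a <= k -> m <= #|V| -> 3 * k <= 3 * 'C(m,2) + 2 * m ->
  3 * narcs a <= 3 * 'C(#|V|, 2) + 2 * #|V|.
Proof.
move=> hk hm hb; have := leq_bin2l 2 hm; lia.
Qed.

Lemma crit_list (l : seq (V * V)) :
  ~ two_dicolourable setT [rel u v | a u v && ((u, v) \in l)] ->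
  forall u v, a u v -> (u, v) \in l.
Proof.
move=> nc u v auv; apply/negPn/negP => nl; apply: nc.
case: critA => _ H; apply: H; split.
  by move=> x y /= /andP[-> _]; rewrite !inE.
by right; exists u, v; rewrite /= auv nl.
Qed.

Lemma narcs_list (l : seq (V * V)) : (forall u v, a u v -> (u, v) \in l) ->
  narcs a <= size l.
Proof.
move=> H; apply: leq_trans (card_size l); rewrite /narcs.
apply: subset_leq_card; apply/subsetP => [[u v]]; rewrite inE /= => auv.
exact: H.
Qed.

Lemma uniq_card (s : seq V) : uniq s -> size s <= #|V|.
Proof. by move/card_uniqP <-; apply: max_card. Qed.

Lemma all_in (s : seq V) : uniq s -> size s = #|V| -> forall v, v \in s.
Proof.
move=> us hs v; apply/negPn/negP => nv.
have : uniq (v :: s) by rewrite /= nv us.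
by move/uniq_card; rewrite /= hs ltnn.
Qed.

Lemma nocol_of (r : rel V) : (forall col : V -> bool, ~ two_dicolouring setT r col) ->
  ~ two_dicolourable setT r.
Proof. by move=> H [col Hc]; apply: (H col). Qed.

Lemma iso_list n (x0 : V) (s : seq V) (b : rel 'I_n.+1) : uniq s -> size s = n.+1 -> size s = #|V| ->
  (forall u v, a u v = b (inord (index u s)) (inord (index v s))) ->
  diso a b.
Proof.
move=> us hs hV H.
have ins := all_in us hV.
exists (fun v => inord (index v s)); split => //.
exists (fun i : 'I_n.+1 => nth x0 s i) => [v|i].
  rewrite inordK; first by rewrite nth_index.
  by rewrite -hs index_mem.
rewrite index_uniq ?hs //; exact: inord_val.
Qed.

Lemma inord_idx n (s : seq V) u v : uniq s -> size s = n.+1 -> u \in s -> v \in s ->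
  (inord (index u s) == inord (index v s) :> 'I_n.+1) = (u == v).
Proof.
move=> us hs us' vs'; apply/eqP/eqP => [E|->//].
have iu : index u s < n.+1 by rewrite -hs index_mem.
have iv : index v s < n.+1 by rewrite -hs index_mem.
have := congr1 (@nat_of_ord _) E; rewrite (inordK iu) (inordK iv) => E'.
by rewrite -(nth_index u us') -(nth_index u vs') E'.
Qed.

Lemma case_tri x y z : dg a x y -> dg a y z -> dg a z x -> ~ diso a K3_arcs ->
  3 * narcs a <= 3 * 'C(#|V|, 2) + 2 * #|V|.
Proof.
move=> dxy dyz dzx niso.
have nxy := dg_neq loopA dxy; have nyz := dg_neq loopA dyz; have nzx := dg_neq loopA dzx.
have /andP[axy ayx] := dxy; have /andP[ayz azy] := dyz; have /andP[azx axz] := dzx.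
set l := [:: (x,y);(y,x);(y,z);(z,y);(z,x);(x,z)].
have nc : ~ two_dicolourable setT [rel u v | a u v && ((u, v) \in l)].
  apply: nocol_of => col Hc.
  have h1 := bichrom Hc (x := x) (y := y); have h2 := bichrom Hc (x := y) (y := z).
  have h3 := bichrom Hc (x := z) (y := x).
  move: h1 h2 h3; rewrite /= axy ayx ayz azy azx axz /l !inE !eqxx ?orbT /=.
  move=> /(_ isT isT nxy) h1 /(_ isT isT nyz) h2 /(_ isT isT nzx) h3.
  by move: h1 h2 h3; case: (col x); case: (col y); case: (col z).
have hl := crit_list nc.
have hn : narcs a <= 6 by exact: narcs_list hl.
have us : uniq [:: x; y; z] by rewrite /= !inE negb_or nxy eq_sym nzx nyz.
have h3 : 3 <= #|V| := uniq_card us.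
have [h4|h3'] := leqP 4 #|V|; first by apply: (bound_of hn h4).
exfalso; apply: niso.
have hV : size [:: x; y; z] = #|V|.
  by apply/eqP; rewrite /= eqn_leq; apply/andP; split; [exact: h3 | exact: h3'].
apply: (iso_list (n := 2) x us) => // u v.
have ins := all_in us hV.
rewrite /K3_arcs inord_idx ?ins //.
move: (ins u) (ins v); rewrite !inE => /or3P[]/eqP-> /or3P[]/eqP->;
  by rewrite ?eqxx ?(negbTE (loopA _)) ?axy ?ayx ?ayz ?azy ?azx ?axz ?nxy ?nyz ?nzx
    // ?(eq_sym y x) ?(eq_sym z y) ?(eq_sym x z) ?nxy ?nyz ?nzx.
Qed.

Lemma case_c5 p1 p2 p3 p4 p5 : dg a p1 p2 -> dg a p2 p3 -> dg a p3 p4 -> dg a p4 p5 ->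
  dg a p5 p1 -> uniq [:: p1; p2; p3; p4; p5] ->
  3 * narcs a <= 3 * 'C(#|V|, 2) + 2 * #|V|.
Proof.
move=> d12 d23 d34 d45 d51 us.
have n12 := dg_neq loopA d12; have n23 := dg_neq loopA d23; have n34 := dg_neq loopA d34.
have n45 := dg_neq loopA d45; have n51 := dg_neq loopA d51.
have /andP[a12 a21] := d12; have /andP[a23 a32] := d23; have /andP[a34 a43] := d34.
have /andP[a45 a54] := d45; have /andP[a51 a15] := d51.
set l := [:: (p1,p2);(p2,p1);(p2,p3);(p3,p2);(p3,p4);(p4,p3);(p4,p5);(p5,p4);(p5,p1);(p1,p5)].
have nc : ~ two_dicolourable setT [rel u v | a u v && ((u, v) \in l)].
  apply: nocol_of => col Hc.
  have h1 := bichrom Hc (x := p1) (y := p2); have h2 := bichrom Hc (x := p2) (y := p3).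
  have h3 := bichrom Hc (x := p3) (y := p4); have h4 := bichrom Hc (x := p4) (y := p5).
  have h5 := bichrom Hc (x := p5) (y := p1).
  move: h1 h2 h3 h4 h5; rewrite /= a12 a21 a23 a32 a34 a43 a45 a54 a51 a15 /l !inE !eqxx ?orbT /=.
  move=> /(_ isT isT n12) h1 /(_ isT isT n23) h2 /(_ isT isT n34) h3 /(_ isT isT n45) h4
    /(_ isT isT n51) h5.
  by move: h1 h2 h3 h4 h5; case: (col p1); case: (col p2); case: (col p3); case: (col p4);
    case: (col p5).
have hn : narcs a <= 10 by exact: narcs_list (crit_list nc).
have h5 : 5 <= #|V| := uniq_card us.
by apply: (bound_of hn h5).
Qed.

Lemma case_w3 c x y z : dg a c x -> dg a c y -> dg a c z -> a x y -> a y z -> a z x ->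
  ~ diso a W3_arcs ->
  3 * narcs a <= 3 * 'C(#|V|, 2) + 2 * #|V|.
Proof.
move=> dcx dcy dcz axy ayz azx niso.
have ncx := dg_neq loopA dcx; have ncy := dg_neq loopA dcy; have ncz := dg_neq loopA dcz.
have nxy := a_neq loopA axy; have nyz := a_neq loopA ayz; have nzx := a_neq loopA azx.
have /andP[acx axc] := dcx; have /andP[acy ayc] := dcy; have /andP[acz azc] := dcz.
set l := [:: (c,x);(x,c);(c,y);(y,c);(c,z);(z,c);(x,y);(y,z);(z,x)].
have nc : ~ two_dicolourable setT [rel u v | a u v && ((u, v) \in l)].
  apply: nocol_of => col Hc.
  have h1 := bichrom Hc (x := c) (y := x); have h2 := bichrom Hc (x := c) (y := y).
  have h3 := bichrom Hc (x := c) (y := z).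
  move: h1 h2 h3; rewrite /= acx axc acy ayc acz azc /l !inE !eqxx ?orbT /=.
  move=> /(_ isT isT ncx) h1 /(_ isT isT ncy) h2 /(_ isT isT ncz) h3.
  have exy : col y = col x by move: h1 h2; case: (col c); case: (col x); case: (col y).
  have exz : col z = col x by move: h1 h3; case: (col c); case: (col x); case: (col z).
  apply: (Hc (col x)); exists [:: x; y; z]; split => //.
  - by rewrite /= !inE negb_or nxy eq_sym nzx nyz.
  - by rewrite /= !inE exy exz eqxx.
  - by rewrite /= axy ayz azx !inE !eqxx ?orbT.
have hl := crit_list nc.
have hn : narcs a <= 9 by exact: narcs_list hl.
have us : uniq [:: x; y; z; c].
  by rewrite /= !inE !negb_or nxy eq_sym nzx nyz !(eq_sym _ c) ncx ncy ncz.
have h4 : 4 <= #|V| := uniq_card us.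
have [h5|h4'] := leqP 5 #|V|; first by apply: (bound_of hn h5).
exfalso; apply: niso.
have hV : size [:: x; y; z; c] = #|V|.
  by apply/eqP; rewrite /= eqn_leq; apply/andP; split; [exact: h4 | exact: h4'].
apply: (iso_list (n := 3) x us) => // u v.
have ins := all_in us hV.
have -> : a u v = ((u, v) \in l).
  apply/idP/idP; first exact: hl.
  have al : all (fun p => a p.1 p.2) l by rewrite /= acx axc acy ayc acz azc axy ayz azx.
  by move/(allP al).
have E1 := negbTE nxy; have E2 := negbTE nyz; have E3 := negbTE nzx.
have E4 := negbTE ncx; have E5 := negbTE ncy; have E6 := negbTE ncz.
have E7 : (y == x) = false by rewrite eq_sym.
have E8 : (z == y) = false by rewrite eq_sym.
have E9 : (x == z) = false by rewrite eq_sym.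
have E10 : (x == c) = false by rewrite eq_sym.
have E11 : (y == c) = false by rewrite eq_sym.
have E12 : (z == c) = false by rewrite eq_sym.
move: (ins u) (ins v); rewrite !inE => /or4P[]/eqP-> /or4P[]/eqP->;
  rewrite /l /W3_arcs ?inE ?xpair_eqE /= ?eqxx ?E1 ?E2 ?E3 ?E4 ?E5 ?E6 ?E7 ?E8 ?E9 ?E10 ?E11 ?E12 /=
   ?inordK //.
Qed.
End Special.


Lemma card_set_sum (T : finType) (P : pred T) : #|[set x | P x]| = \sum_x (P x : nat).
Proof.
rewrite -sum1_card big_mkcond /=; apply: eq_bigr => x _; rewrite inE; by case: (P x).
Qed.

Section Count.
Variables (V : finType) (a : rel V).
Hypothesis loopA : loopless a.
Hypothesis critA : dicritical3 a.
Hypothesis noTri : forall x y z, dg a x y -> dg a y z -> dg a z x -> False.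
Hypothesis noC5 : forall p1 p2 p3 p4 p5, dg a p1 p2 -> dg a p2 p3 -> dg a p3 p4 ->
  dg a p4 p5 -> dg a p5 p1 -> uniq [:: p1; p2; p3; p4; p5] -> False.
Hypothesis noCyc : forall c x y z, dg a c x -> dg a c y -> dg a c z ->
  a x y -> a y z -> a z x -> False.

Definition nadj u v := [&& u != v, ~~ a u v & ~~ a v u].
Definition deg v := \sum_w (dg a v w : nat).
Definition nu v := \sum_y (nadj v y : nat).
Definition P2 v c y := [&& dg a v c, dg a c y & nadj v y].
Definition P3 v w z y := [&& dg a v w, dg a w z, dg a z y, z != v & y != w].

Notation dsym := (dg_sym a).
Notation dneq := (dg_neq loopA).

Lemma P3_nv v w z y : P3 v w z y -> v != y.
Proof.
case/and5P=> dvw dwz dzy _ _; apply/eqP => E; subst y.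
by apply: (noTri dvw dwz dzy).
Qed.

Lemma stepA v : \sum_c \sum_y (P2 v c y : nat) + \sum_w \sum_z \sum_y (P3 v w z y : nat)
  <= nu v.
Proof.
rewrite pair_bigA /=.
have -> : \sum_w \sum_z \sum_y (P3 v w z y : nat) =
          \sum_(t : V * (V * V)) (P3 v t.1 t.2.1 t.2.2 : nat).
  rewrite -(pair_bigA _ (fun w p => (P3 v w p.1 p.2 : nat))) /=.
  by apply: eq_bigr => w _; rewrite pair_bigA.
rewrite -!card_set_sum /nu -card_set_sum.
set A2 := [set p : V * V | P2 v p.1 p.2].
set A3 := [set t : V * (V * V) | P3 v t.1 t.2.1 t.2.2].
have inj2 : {in A2 &, injective snd}.
  move=> [c y] [c' y'] /=; rewrite !inE /= => /and3P[dvc dcy nvy] /and3P[dvc' dcy' _] /= E.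
  subst y'; case: (eqVneq c c') => [->//|ncc].
  exfalso; have d1 : dg a y c' by rewrite dsym.
  have d2 : dg a c' v by rewrite dsym.
  apply: (noC4 loopA critA dvc dcy d1 d2 _ ncc).
  by case/and3P: nvy.
have inj3 : {in A3 &, injective (fun t : V * (V * V) => t.2.2)}.
  move=> [w [z y]] [w' [z' y']] /=; rewrite !inE /= => H H' E; subst y'.
  have nvy := P3_nv H.
  case/and5P: H => dvw dwz dzy nzv nyw; case/and5P: H' => dvw' dwz' dzy' nzv' nyw'.
  case: (eqVneq w w') => [ew|nww]; case: (eqVneq z z') => [ez|nzz].
  - by subst.
  - subst w'; exfalso.
    have d1 : dg a y z' by rewrite dsym.
    have d2 : dg a z' w by rewrite dsym.
    apply: (noC4 loopA critA dwz dzy d1 d2 _ nzz).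
    by rewrite eq_sym.
  - subst z'; exfalso.
    have d1 : dg a z w' by rewrite dsym.
    have d2 : dg a w' v by rewrite dsym.
    apply: (noC4 loopA critA dvw dwz d1 d2 _ nww).
    by rewrite eq_sym.
  - exfalso.
    have nzw' : z != w'.
      apply/eqP => E; subst w'; apply: (noTri dvw dwz); by rewrite dsym.
    have nz'w : z' != w.
      apply/eqP => E; subst z'; apply: (noTri dvw' dwz'); by rewrite dsym.
    have d1 : dg a y z' by rewrite dsym.
    have d2 : dg a z' w' by rewrite dsym.
    have d3 : dg a w' v by rewrite dsym.
    apply: (noC6 loopA critA dvw dwz dzy d1 d2 d3); by rewrite // eq_sym.
rewrite -(card_in_imset inj2) -(card_in_imset inj3).
set I2 := snd @: A2; set I3 := (fun t : V * (V * V) => t.2.2) @: A3.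
have dis : I2 :&: I3 = set0.
  apply/setP => y; rewrite !inE; apply/negP => /andP[/imsetP[[c y0] H2 E0] /imsetP[[w [z y1]] H3 E1]].
  simpl in E0, E1; subst y0 y1.
  move: H2 H3; rewrite !inE /= => /and3P[dvc dcy nvy] H3.
  have nvy' := P3_nv H3.
  case/and5P: H3 => dvw dwz dzy nzv nyw.
  case: (eqVneq c w) => [ecw|ncw].
    subst c; apply: (noTri dwz dzy); by rewrite dsym.
  case: (eqVneq c z) => [ecz|ncz].
    subst c; apply: (noTri dvw dwz); by rewrite dsym.
  have d1 : dg a y c by rewrite dsym.
  have d2 : dg a c v by rewrite dsym.
  apply: (noC5 dvw dwz dzy d1 d2).
  rewrite /= !inE !negb_or (dneq dvw) (dneq dwz) (dneq dzy) (dneq d1) eq_sym nzv nvy' /=.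
  by rewrite (eq_sym w y) nyw (eq_sym v c) (dneq d2) (eq_sym w c) ncw (eq_sym z c) ncz.
have := cardsU I2 I3; rewrite dis cards0 subn0 => <-.
apply: subset_leq_card; apply/subsetP => y; rewrite !inE => /orP[] /imsetP[p Hp ->].
  by move: Hp; rewrite inE => /and3P[].
move: p Hp => [w [z y0]]; rewrite inE /= => H.
have nvy := P3_nv H.
case/and5P: H => dvw dwz dzy nzv nyw.
by rewrite /nadj nvy (path3_nadj loopA critA dvw dwz dzy).
Qed.

Lemma TF c x y z : dg a c x -> dg a c y -> dg a c z ->
  a x y || a y x -> a y z || a z y -> a x z || a z x -> False.
Proof.
move=> dcx dcy dcz /orP[axy|ayx] /orP[ayz|azy] /orP[axz|azx].
- exact: (trans_tri loopA critA dcx dcy dcz axy ayz axz).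
- exact: (noCyc dcx dcy dcz axy ayz azx).
- exact: (trans_tri loopA critA dcx dcz dcy axz azy axy).
- exact: (trans_tri loopA critA dcz dcx dcy azx axy azy).
- exact: (trans_tri loopA critA dcy dcx dcz ayx axz ayz).
- exact: (trans_tri loopA critA dcy dcz dcx ayz azx ayx).
- exact: (noCyc dcx dcz dcy axz azy ayx).
- exact: (trans_tri loopA critA dcz dcy dcx azy ayx azx).
Qed.

Definition Q c := \sum_x \sum_y (dg a c x && dg a c y && nadj x y : nat).

Lemma stepB : \sum_v \sum_c \sum_y (P2 v c y : nat) = \sum_c Q c.
Proof.
rewrite exchange_big /=; apply: eq_bigr => c _; apply: eq_bigr => v _.
by apply: eq_bigr => y _; rewrite /P2 dsym andbA.
Qed.

Lemma sum_prod (f g : V -> nat) : \sum_x \sum_y f x * g y = (\sum_x f x) * (\sum_y g y).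
Proof. by rewrite big_distrl; apply: eq_bigr => x _; rewrite big_distrr. Qed.

Lemma sum_eq1 (x0 : V) : \sum_y ((y == x0) : nat) = 1.
Proof.
rewrite (bigD1 x0) //= eqxx big1 // => y /negbTE -> //.
Qed.

Lemma star c : 2 * (deg c - 2) <= Q c.
Proof.
case: (posnP (deg c)) => [->//|]; rewrite lt0n => /eqP.
rewrite /deg => /eqP; rewrite sum_nat_eq0 => /forallPn [x0]; rewrite implyTb => dcx0.
have {}dcx0 : dg a c x0 by move: dcx0; case: (dg a c x0).
set inA := fun y => [&& dg a c y, y != x0 & a x0 y || a y x0].
set inB := fun y => dg a c y && nadj x0 y.
set SA := \sum_y (inA y : nat); set SB := \sum_y (inB y : nat).
have hdeg : deg c = 1 + SA + SB.
  rewrite -(sum_eq1 x0) /SA /SB -!big_split /=; apply: eq_bigr => y _.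
  rewrite /inA /inB /nadj.
  case: (eqVneq y x0) => [->|nyx]; first by rewrite dcx0 !(negbTE (loopA x0)).
  rewrite /=; case: (dg a c y) => //=.
  by case: (a x0 y); case: (a y x0).
have hAA : \sum_x \sum_y (inA x && inA y && (x != y) : nat) + SA = SA * SA.
  rewrite -sum_prod /SA -big_split /=; apply: eq_bigr => x _.
  rewrite (bigD1 x) //= [X in _ = X](bigD1 x) //= eqxx andbF add0n mulnb andbb addnC.
  congr (_ + _); apply: eq_bigr => y nyx; by rewrite eq_sym nyx andbT mulnb.
have hQ : \sum_x \sum_y ((x == x0) && inB y : nat) + \sum_x \sum_y (inB x && (y == x0) : nat)
    + \sum_x \sum_y (inA x && inA y && (x != y) : nat) <= Q c.
  rewrite -!big_split; apply: leq_sum => x _; rewrite -!big_split; apply: leq_sum => y _ /=.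
  rewrite /inA /inB /nadj.
  have l0 := negbTE (loopA x0).
  case: (eqVneq x x0) => [->|nxx].
    rewrite dcx0 l0 /=; case: (eqVneq y x0) => [->|nyx]; first by rewrite dcx0 l0.
    by rewrite /=; case: (dg a c y); case: (a x0 y); case: (a y x0).
  case: (eqVneq y x0) => [->|nyx].
    rewrite dcx0 l0 /= !andbT /=.
    by rewrite nxx !andbF addn0; case: (dg a c x); case: (a x0 x); case: (a x x0).
  rewrite /= andbF /=.
  case dcx: (dg a c x); case dcy: (dg a c y); rewrite /= ?andbF //.
  case: (eqVneq x y) => [<-|nxy]; first by rewrite andbF.
  rewrite andbT /=.
  case ax: (a x0 x || a x x0); case ay: (a x0 y || a y x0) => //=.
  case: (a x y) / idP => axy; case: (a y x) / idP => ayx //=; exfalso;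
    apply: (TF dcx0 dcx dcy) => //; rewrite ?axy ?ayx ?orbT //.
have s1 : \sum_x \sum_y ((x == x0) && inB y : nat) = SB.
  rewrite -[RHS]mul1n -(sum_eq1 x0) -sum_prod; apply: eq_bigr => x _; apply: eq_bigr => y _.
  by rewrite mulnb.
have s2 : \sum_x \sum_y (inB x && (y == x0) : nat) = SB.
  rewrite -[RHS]muln1 -(sum_eq1 x0) -sum_prod; apply: eq_bigr => x _; apply: eq_bigr => y _.
  by rewrite mulnb.
move: hQ; rewrite s1 s2 => hQ.
move: hdeg; rewrite /deg => hdeg.
nia.
Qed.

Lemma deg_minus w z : dg a w z -> \sum_v (dg a w v && (v != z) : nat) = (deg w).-1.
Proof.
move=> dwz; rewrite /deg [X in _ = X.-1](bigD1 z) //= dwz /= big_mkcond /=.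
rewrite add0n [RHS]big_mkcond; apply: eq_bigr => v _; by case: (v != z); rewrite ?andbT ?andbF.
Qed.

Lemma stepC : \sum_v \sum_w \sum_z \sum_y (P3 v w z y : nat) =
  \sum_w \sum_z (dg a w z * ((deg w).-1 * (deg z).-1)).
Proof.
rewrite exchange_big /=; apply: eq_bigr => w _.
rewrite exchange_big /=; apply: eq_bigr => z _.
case dwz: (dg a w z).
  rewrite mul1n -(deg_minus dwz).
  have dzw : dg a z w by rewrite dg_sym.
  rewrite -(deg_minus dzw) -sum_prod; apply: eq_bigr => v _; apply: eq_bigr => y _.
rewrite mulnb /P3 dwz /= (dg_sym a v w) (eq_sym z v); congr (nat_of_bool _); by case: (dg a w v); case: (v != z); case: (dg a z y); case: (y != w).
rewrite mul0n big1 // => v _; rewrite big1 // => y _.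
by rewrite /P3 dwz /= andbF.
Qed.

Definition beta v w := if deg v == 1 then (if deg w == 1 then 3 else 4)
                       else (if deg w == 1 then 2 else 3).

Lemma stepE : \sum_v \sum_w (dg a v w * beta v w) = 3 * \sum_v deg v.
Proof.
have h1 : \sum_v \sum_w (dg a v w * beta v w) = \sum_v \sum_w (dg a v w * beta w v).
  rewrite exchange_big /=; apply: eq_bigr => v _; apply: eq_bigr => w _.
  by rewrite dg_sym.
have h2 : \sum_v \sum_w (dg a v w * beta v w) + \sum_v \sum_w (dg a v w * beta w v)
          = 6 * \sum_v deg v.
  rewrite -big_split big_distrr /=; apply: eq_bigr => v _.
  rewrite -big_split /deg big_distrr /=; apply: eq_bigr => w _.
  rewrite -mulnDr mulnC; congr (_ * _).
  by rewrite /beta; case: (deg v == 1); case: (deg w == 1).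
lia.
Qed.

Lemma sum_le_k v k : (forall w, dg a v w -> beta v w <= k) ->
  \sum_w (dg a v w * beta v w) <= k * deg v.
Proof.
move=> H; rewrite /deg big_distrr /=; apply: leq_sum => w _.
by case dvw: (dg a v w); rewrite ?mul1n ?muln1 ?mul0n ?muln0 //; apply: H.
Qed.

Lemma deg_pos v w : dg a v w -> 0 < deg w.
Proof.
by move=> dvw; rewrite /deg (bigD1 v) //= dg_sym dvw.
Qed.

Lemma stepD v : \sum_w (dg a v w * beta v w) <=
  4 + 3 * Q v + 3 * \sum_z (dg a v z * ((deg v).-1 * (deg z).-1)).
Proof.
have hQ := star v.
case: (ltnP (deg v) 2) => hd.
  apply: leq_trans (sum_le_k (k := 4) _) _.
    by move=> w _; rewrite /beta; case: (deg v == 1); case: (deg w == 1).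
  lia.
have hb : forall w, dg a v w -> beta v w <= 3.
  move=> w _; rewrite /beta; have -> : (deg v == 1) = false by apply/eqP; lia.
  by case: (deg w == 1).
case: (ltnP 2 (deg v)) => hd3.
  apply: leq_trans (sum_le_k hb) _; lia.
have hd2 : deg v = 2 by lia.
case: (boolP [exists z, dg a v z && (deg z != 1)]).
  case/existsP => z /andP[dvz dz].
  have := deg_pos dvz => dzp.
  have hz : 1 <= \sum_z (dg a v z * ((deg v).-1 * (deg z).-1)).
    rewrite (bigD1 z) //= dvz hd2 /=; lia.
  apply: leq_trans (sum_le_k hb) _; lia.
move/existsPn => H.
apply: leq_trans (sum_le_k (k := 2) _) _; last by lia.
move=> w dvw; have := H w; rewrite dvw /= negbK /beta => /eqP ->.
by rewrite /beta hd2.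
Qed.

Lemma sumD (f g : V -> nat) : \sum_v (f v + g v) = \sum_v f v + \sum_v g v.
Proof. exact: big_split. Qed.
Lemma sumM k (f : V -> nat) : \sum_v (k * f v) = k * \sum_v f v.
Proof. by rewrite big_distrr. Qed.
Lemma sumC k : \sum_(v : V) k = k * #|V|.
Proof. by rewrite sum_nat_const mulnC. Qed.

Lemma main_ineq : 3 * \sum_v deg v <= 4 * #|V| + 3 * \sum_v nu v.
Proof.
rewrite -stepE.
apply: leq_trans; first by apply: leq_sum => v _; exact: stepD.
rewrite (sumD (fun v => 4 + 3 * Q v)) (sumD (fun _ => 4)) (sumM 3 Q).
rewrite (sumM 3 (fun v => \sum_z (dg a v z * ((deg v).-1 * (deg z).-1)))) sumC -stepB.
have -> : \sum_v \sum_z (dg a v z * ((deg v).-1 * (deg z).-1)) =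
          \sum_v \sum_w \sum_z \sum_y (P3 v w z y : nat) by rewrite stepC.
have : \sum_v (\sum_c \sum_y (P2 v c y : nat) + \sum_w \sum_z \sum_y (P3 v w z y : nat)) <= \sum_v nu v.
  by apply: leq_sum => v _; exact: stepA.
rewrite sumD.
lia.
Qed.
End Count.


Section Ident.
Variables (V : finType) (a : rel V).
Hypothesis loopA : loopless a.

Lemma sumD' (f g : V -> nat) : \sum_v (f v + g v) = \sum_v f v + \sum_v g v.
Proof. exact: big_split. Qed.

Lemma count_id : 2 * narcs a + \sum_u nu a u + #|V| = #|V| * #|V| + \sum_u deg a u.
Proof.
have hN : narcs a = \sum_u \sum_v (a u v : nat).
  by rewrite /narcs (@card_set_sum _ (fun p : V * V => a p.1 p.2)) -(pair_bigA _ (fun u v => (a u v : nat))).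
have hN' : narcs a = \sum_u \sum_v (a v u : nat).
  by rewrite hN exchange_big.
have per : forall u, \sum_v (a u v : nat) + \sum_v (a v u : nat) + nu a u + 1 =
                     #|V| + deg a u.
  move=> u; rewrite -(sum_eq1 u) -[#|V|]mul1n -(sumC V 1) /nu /deg -!sumD'; apply: eq_bigr => v _.
  rewrite /nadj /dg; case: (eqVneq v u) => [->|nvu].
    by rewrite (negbTE (loopA u)).
  by rewrite /=; case: (a u v); case: (a v u).
have H : \sum_u (\sum_v (a u v : nat) + \sum_v (a v u : nat) + nu a u + 1) =
         \sum_u (#|V| + deg a u).
  by apply: eq_bigr => u _; exact: per u.
move: H; rewrite !sumD' -hN -hN' !(sumC V); lia.
Qed.
End Ident.

Unset Implicit Arguments.


Theorem theorem12 (V : finType) (a : rel V) :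
  loopless a ->
  dicritical3 a ->
  ~ diso a K3_arcs ->
  ~ diso a W3_arcs ->
  3 * narcs a <= 3 * 'C(#|V|, 2) + 2 * #|V|.
Proof.
move=> loopA critA nK3 nW3.
case: (boolP [exists x, exists y, exists z, [&& dg a x y, dg a y z & dg a z x]]).
  case/existsP => x /existsP [y /existsP [z /and3P [d1 d2 d3]]].
  exact: (case_tri loopA critA d1 d2 d3 nK3).
move=> hT.
have noTri : forall x y z, dg a x y -> dg a y z -> dg a z x -> False.
  move=> x y z d1 d2 d3; move/negP: hT; apply; apply/existsP; exists x.
  apply/existsP; exists y; apply/existsP; exists z; by rewrite d1 d2 d3.
case: (boolP [exists p1, exists p2, exists p3, exists p4, exists p5,
   [&& dg a p1 p2, dg a p2 p3, dg a p3 p4, dg a p4 p5, dg a p5 p1 &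
       uniq [:: p1; p2; p3; p4; p5]]]).
  case/existsP => p1 /existsP [p2 /existsP [p3 /existsP [p4 /existsP [p5 H]]]].
  case/and5P: H => d1 d2 d3 d4 /andP[d5 u].
  exact: (case_c5 loopA critA d1 d2 d3 d4 d5 u).
move=> h5.
have noC5 : forall p1 p2 p3 p4 p5, dg a p1 p2 -> dg a p2 p3 -> dg a p3 p4 ->
  dg a p4 p5 -> dg a p5 p1 -> uniq [:: p1; p2; p3; p4; p5] -> False.
  move=> p1 p2 p3 p4 p5 d1 d2 d3 d4 d5 u; move/negP: h5; apply.
  apply/existsP; exists p1; apply/existsP; exists p2; apply/existsP; exists p3.
  apply/existsP; exists p4; apply/existsP; exists p5; by rewrite d1 d2 d3 d4 d5 u.
case: (boolP [exists c, exists x, exists y, exists z,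
   [&& dg a c x, dg a c y, dg a c z, a x y, a y z & a z x]]).
  case/existsP => c /existsP [x /existsP [y /existsP [z H]]].
  case/and5P: H => d1 d2 d3 e1 /andP[e2 e3].
  exact: (case_w3 loopA critA d1 d2 d3 e1 e2 e3 nW3).
move=> hc.
have noCyc : forall c x y z, dg a c x -> dg a c y -> dg a c z ->
  a x y -> a y z -> a z x -> False.
  move=> c x y z d1 d2 d3 e1 e2 e3; move/negP: hc; apply.
  apply/existsP; exists c; apply/existsP; exists x; apply/existsP; exists y.
  apply/existsP; exists z; by rewrite d1 d2 d3 e1 e2 e3.
have hm := main_ineq loopA critA noTri noC5 noCyc.
have hc2 := count_id loopA.
have hb := bin2_eq #|V|.
lia.
Qed.
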